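(* Suppose $X_1,X_2\in\mathcal L^2$ have the same distribution. Then $(X_1,X_2)\in\mathrm{IC}_0$ if and only if its random rearrangement $(X_{\pi_1},X_{\pi_2})$ is independent.
   Context: $\mathcal L^2$ is the set of non-degenerate real random variables with finite variance. $(X,Y)\in\mathrm{IC}_0$ means $\mathrm{Corr}(g(X),g(Y))=0=\mathrm{Corr}(X,Y)$ for every measurable $g$ with $g(X),g(Y)\in\mathcal L^2$. Let $(\pi_1,\pi_2)$ be uniformly distributed on $\{(1,2),(2,1)\}$ and independent of $(X_1,X_2)$; the random rearrangement of $(X_1,X_2)$ is $(X_{\pi_1},X_{\pi_2})$, whose law is the equal mixture of the laws of $(X_1,X_2)$ and $(X_2,X_1)$. *)

(* Defs.v *)
From HB Require Import structures.
From mathcomp Require Import all_boot all_order all_algebra.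
From mathcomp Require Import all_classical all_reals all_analysis.
Set Implicit Arguments. Unset Strict Implicit. Unset Printing Implicit Defensive.
Import Order.TTheory GRing.Theory Num.Theory.
Local Open Scope classical_set_scope.
Local Open Scope ring_scope.

Section defs.
Context {d : measure_display} {T : measurableType d} {R : realType}.
Variable P : probability T R.

Definition corr (X Y : T -> R) : R :=
  fine (covariance P X Y) /
    Num.sqrt (fine (variance P X) * fine (variance P Y)).

Definition inL2 (X : T -> R) : Prop :=
  X \in Lfun P 2%:E /\ ~ (exists c : R, P [set t | X t = c] = 1%E).

Definition IC0 (X Y : T -> R) : Prop :=
  (forall g : R -> R, measurable_fun setT g ->
     inL2 (g \o X) -> inL2 (g \o Y) -> corr (g \o X) (g \o Y) = 0)
  /\ corr X Y = 0.

(* Law of the random rearrangement (X_{pi_1}, X_{pi_2}) evaluated on the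
   rectangle A x B: the equal mixture of the laws of (X1,X2) and (X2,X1). *)
Definition rearr_law (X1 X2 : T -> R) (A B : set R) : \bar R :=
  ((P (X1 @^-1` A `&` X2 @^-1` B) + P (X2 @^-1` A `&` X1 @^-1` B))
    * (2^-1)%:E)%E.

Definition rearr_indep (X1 X2 : T -> R) : Prop :=
  forall A B : set R, measurable A -> measurable B ->
    rearr_law X1 X2 A B = (rearr_law X1 X2 A setT * rearr_law X1 X2 setT B)%E.
End defs.

(* Main.v *)
Require Import Defs.
From HB Require Import structures.
From mathcomp Require Import all_boot all_order all_algebra.
From mathcomp Require Import all_classical all_reals all_analysis.
From mathcomp Require Import ring lra.
From mathcomp Require Import measurable_realfun.
Set Implicit Arguments. Unset Strict Implicit. Unset Printing Implicit Defensive.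
Import Order.TTheory GRing.Theory Num.Theory.
Local Open Scope classical_set_scope.
Local Open Scope ring_scope.
Section S.
Context (d : measure_display) (T : measurableType d) (R : realType) (P : probability T R).

Definition pairf (X Y : {RV P >-> R}) : T -> (R * R)%type := fun t => (X t, Y t).
Lemma pairf_mes (X Y : {RV P >-> R}) : measurable_fun setT (pairf X Y).
Proof. exact: measurable_fun_pair. Qed.
HB.instance Definition _ (X Y : {RV P >-> R}) := isMeasurableFun.Build _ _ _ _ _ (pairf_mes X Y).

Lemma half_twice (x : \bar R) : ((x + x) * (2^-1)%:E)%E = x.
Proof.
case: x => [r| |] //=.
- by rewrite -EFinD -EFinM; congr (_%:E); field.
- by rewrite gt0_mulye // lte_fin.
- by rewrite gt0_mulNye // lte_fin.
Qed.

Variables X1 X2 : {RV P >-> R}.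
Hypothesis Hd : distribution P X1 = distribution P X2.
Hypothesis H : rearr_indep P X1 X2.
Let mu := distribution P X1.

Lemma rearr_marg1 A : measurable A -> rearr_law P X1 X2 A setT = mu A.
Proof.
move=> mA; rewrite /rearr_law !preimage_setT !setIT.
have -> : P (X2 @^-1` A) = mu A by rewrite /mu Hd.
exact: half_twice.
Qed.

Lemma rearr_marg2 B : measurable B -> rearr_law P X1 X2 setT B = mu B.
Proof.
move=> mB; rewrite /rearr_law !preimage_setT !setTI.
have -> : P (X2 @^-1` B) = mu B by rewrite /mu Hd.
exact: half_twice.
Qed.

Let rho := distribution P (pairf X1 X2).
Let rho' := distribution P (pairf X2 X1).
Let nu := measure_add rho rho'.
Let h : {nonneg R} := (2^-1)%:nng.
Let m' := mscale h nu.

Lemma prod_eq E : measurable E -> (mu \x mu)%E E = m' E.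
Proof.
apply: product_measure_unique => A B mA mB.
transitivity (rearr_law P X1 X2 A setT * rearr_law P X1 X2 setT B)%E; last first.
  by rewrite rearr_marg1 // rearr_marg2.
rewrite -H //= /mscale /= /rearr_law muleC.
congr (_ * _)%E.
by rewrite /msum 2!big_ord_recl big_ord0 adde0.
Qed.

Lemma core (F : (R * R)%type -> \bar R) : measurable_fun setT F ->
  (forall z, (0 <= F z)%E) -> (forall x y, F (x, y) = F (y, x)) ->
  (\int[P]_t F (X1 t, X2 t) = \int[mu \x mu]_z F z)%E.
Proof.
move=> mF F0 Fs.
have F0' : forall z, setT z -> (0 <= F z)%E by move=> z _; exact: F0.
have F0'' : forall z, z \in setT -> (0 <= F z)%E by move=> z _; exact: F0.
rewrite (eq_measure_integral m'); last by move=> E mE _; exact: prod_eq.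
rewrite ge0_integral_mscale //.
rewrite /nu ge0_integral_measure_add //.
rewrite /rho /rho' /distribution.
rewrite !ge0_integral_pushforward //; try exact: pairf_mes.
rewrite !preimage_setT.
have -> : (\int[P]_(x in setT) (F \o pairf X2 X1) x = \int[P]_(x in setT) (F \o pairf X1 X2) x)%E.
  by apply: eq_integral => t _; rewrite /= /pairf Fs.
by rewrite muleC half_twice.
Qed.

Lemma core_signed (k : (R * R)%type -> R) : measurable_fun setT k ->
  (forall x y, k (x, y) = k (y, x)) ->
  (\int[P]_t (k (X1 t, X2 t))%:E = \int[mu \x mu]_z (k z)%:E)%E.
Proof.
move=> mk ks.
have mk' : measurable_fun setT (EFin \o k) by exact/measurable_EFinP.
have -> : (fun t => (k (X1 t, X2 t))%:E) = (EFin \o k) \o pairf X1 X2 by [].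
rewrite integralE [RHS]integralE funepos_comp funeneg_comp; congr (_ - _)%E.
- have := @core ((EFin \o k)^\+)%E (measurable_funepos mk') (fun z => funepos_ge0 _ z).
  move=> ->; first by [].
  by move=> x y; rewrite !funeposE /= ks.
- have := @core ((EFin \o k)^\-)%E (measurable_funeneg mk') (fun z => funeneg_ge0 _ z).
  move=> ->; first by [].
  by move=> x y; rewrite !funenegE /= ks.
Qed.

Lemma cov_zero (g : R -> R) : measurable_fun setT g ->
  (g \o X1) \in Lfun P 2%:E -> (g \o X2) \in Lfun P 2%:E ->
  covariance P (g \o X1) (g \o X2) = 0%E.
Proof.
move=> mg L1 L2.
have Pfin : P setT \is a fin_num := fin_num_measure P _ measurableT.
have L11 := Lfun_subset12 Pfin L1.
have L21 := Lfun_subset12 Pfin L2.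
have L12 := Lfun2_mul_Lfun1 L1 L2.
rewrite covarianceE //.
have mEg : measurable_fun setT (EFin \o g) by exact/measurable_EFinP.
have Ig : mu.-integrable setT (EFin \o g).
  apply: integrable_pushforward => //; rewrite preimage_setT.
  exact/Lfun1_integrable.
have EX1 : ('E_P[g \o X1] = \int[mu]_x (g x)%:E)%E.
  rewrite unlock /mu /distribution integral_pushforward // ?preimage_setT //.
  exact/Lfun1_integrable.
have EX2 : ('E_P[g \o X2] = \int[mu]_x (g x)%:E)%E.
  rewrite unlock /mu Hd /distribution integral_pushforward // ?preimage_setT //.
  exact/Lfun1_integrable.
pose k := fun z : (R * R)%type => g z.1 * g z.2.
have mk : measurable_fun setT k.
  by apply: measurable_funM; apply: measurableT_comp => //.
have ks : forall x y, k (x, y) = k (y, x) by move=> x y; rewrite /k /= mulrC.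
have EXY : ('E_P[(g \o X1) * (g \o X2)] = \int[mu \x mu]_z (k z)%:E)%E.
  by rewrite unlock -core_signed.
have Ik : (mu \x mu)%E.-integrable setT (EFin \o k).
  apply/integrableP; split; first exact/measurable_EFinP.
  rewrite -(@core (fun z => `|(k z)%:E|)%E).
  - by move/Lfun1_integrable/integrableP : L12 => [_].
  - by apply: measurableT_comp => //; exact/measurable_EFinP.
  - by [].
  - by move=> x y; rewrite ks.
rewrite EXY EX1 EX2 -integral12_prod_meas1 //.
have Ifin := integrable_fin_num measurableT Ig.
rewrite /fubini_F.
under eq_integral => x _.
  rewrite /k /=.
  under eq_integral => y _ do rewrite EFinM.
  rewrite integralZl //.
  over.
rewrite -(fineK Ifin) integralZr //=.
by rewrite -[X in (X * _)%E](fineK Ifin) -EFinM -EFinD subrr.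
Qed.

Lemma transfer (F : R -> \bar R) : measurable_fun setT F -> (forall x, (0 <= F x)%E) ->
  (\int[P]_t F (X2 t) = \int[P]_t F (X1 t))%E.
Proof.
move=> mF F0.
have F0' : forall z, z \in setT -> (0 <= F z)%E by move=> z _; exact: F0.
have E (X : {RV P >-> R}) : (\int[distribution P X]_y F y = \int[P]_t F (X t))%E.
  by rewrite /distribution ge0_integral_pushforward // preimage_setT.
by rewrite -!E Hd.
Qed.

Lemma Lfun_transfer (g : R -> R) : measurable_fun setT g ->
  (g \o X1) \in Lfun P 2%:E -> (g \o X2) \in Lfun P 2%:E.
Proof.
move=> mg /andP[_]; rewrite !inE /= /finite_norm => fin.
apply/andP; split; first by rewrite inE /=; exact: measurableT_comp.
rewrite inE /= /finite_norm; move: fin; rewrite unlock /=.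
have -> : (\int[P]_x (`|(EFin \o (g \o X2)) x| `^ 2)%E =
          \int[P]_x (`|(EFin \o (g \o X1)) x| `^ 2))%E.
  apply: (@transfer (fun y => `|(g y)%:E| `^ 2)%E).
  - apply: (measurableT_comp (measurable_poweR _)) => //=.
    apply/measurable_EFinP; exact: measurableT_comp.
  - by move=> y; exact: poweR_ge0.
by [].
Qed.

Lemma deg_cov (Y Z : T -> R) (c : R) : measurable_fun setT Y -> measurable_fun setT Z ->
  P [set t | Y t = c] = 1%E -> covariance P Y Z = 0%E.
Proof.
move=> mY mZ Yc.
have mE : measurable [set t | Y t = c].
  by have := mY measurableT _ (measurable_set1 c); rewrite setTI.
have Hae : \forall t \ae P, Y t = c.
  exists (~` [set t | Y t = c]); split; first exact: measurableC.
    by rewrite probability_setC // Yc subee.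
  by [].
have EY : ('E_P[Y] = c%:E)%E.
  rewrite -(expectation_cst P c) !unlock; apply: ae_eq_integral => //.
  - exact/measurable_EFinP.
  - by apply/measurable_EFinP; exact: measurable_cst.
  - by apply: filterS Hae => t -> _.
rewrite unlock EY /= -[0%E](expectation_cst P 0) !unlock; apply: ae_eq_integral => //.
- apply/measurable_EFinP; apply: measurable_funM.
  + exact: measurable_funB.
  + exact: measurable_funB.
- by apply/measurable_EFinP; exact: measurable_cst.
- apply: filterS Hae => t Yt _.
  have -> : ((Y \- cst c) * (Z \- cst (fine (\int[P]_w (Z w)%:E)))) t = (Y t - c) * (Z t - fine (\int[P]_w (Z w)%:E)) by [].
  by rewrite Yt subrr mul0r.
Qed.

Lemma IC_cov (IC : IC0 P X1 X2) (g : R -> R) : measurable_fun setT g ->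
  (g \o X1) \in Lfun P 2%:E -> fine (covariance P (g \o X1) (g \o X2)) = 0.
Proof.
move=> mg L1; have L2 := Lfun_transfer mg L1.
have Pfin : P setT \is a fin_num := fin_num_measure P _ measurableT.
have mgX1 : measurable_fun setT (g \o X1) by apply: measurableT_comp.
have mgX2 : measurable_fun setT (g \o X2) by apply: measurableT_comp.
case: (pselect (exists c, P [set t | (g \o X1) t = c] = 1%E)) => [[c Hc]|nd1].
  by rewrite (deg_cov mgX1 mgX2 Hc).
have nd2 : ~ exists c, P [set t | (g \o X2) t = c] = 1%E.
  move=> [c Hc]; apply: nd1; exists c; rewrite -Hc.
  change (distribution P X1 (g @^-1` [set c]) = distribution P X2 (g @^-1` [set c])).
  by rewrite Hd.
have := IC.1 g mg (conj L1 nd1) (conj L2 nd2).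
rewrite /corr => /eqP; rewrite mulf_eq0 invr_eq0 => /orP[/eqP //|].
rewrite sqrtr_eq0 => Hle.
have V1f := variance_fin_num L1.
have V2f := variance_fin_num L2.
have v1 : 0 <= fine ('V_P[g \o X1])%E by apply: fine_ge0; exact: variance_ge0.
have v2 : 0 <= fine ('V_P[g \o X2])%E by apply: fine_ge0; exact: variance_ge0.
have HV : (sqrte 'V_P[g \o X1] * sqrte 'V_P[g \o X2] = 0)%E.
  rewrite -sqrteM ?variance_ge0 //.
  rewrite -(fineK V1f) -(fineK V2f) -EFinM.
  have -> : fine ('V_P[g \o X1])%E * fine ('V_P[g \o X2])%E = 0.
    by apply/le_anti; rewrite Hle mulr_ge0.
  by rewrite sqrte0.
have c1 := covariance_le L1 L2; rewrite HV in c1.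
have L1' : (\- (g \o X1))%R \in Lfun P 2%:E by rewrite rpredN.
have c2 := covariance_le L1' L2.
rewrite varianceN // HV (covarianceNl (Lfun_subset12 Pfin L1) (Lfun_subset12 Pfin L2) (Lfun2_mul_Lfun1 L1 L2)) in c2.
have -> : covariance P (g \o X1) (g \o X2) = 0%E.
  by apply/le_anti; rewrite c1 /= -oppe_le0 c2.
by [].
Qed.

Lemma bdd_Lfun (f : T -> R) (M : R) : measurable_fun setT f ->
  (forall t, `|f t| <= M) -> f \in Lfun P 2%:E.
Proof.
move=> mf fM; apply/andP; split; first by rewrite inE.
rewrite inE /= /finite_norm unlock /=; apply: poweR_lty.
apply: (@le_lt_trans _ _ (\int[P]_x (cst ((M `^ 2)%:E) x))%E).
- apply: ge0_le_integral => //.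
  all: try (move=> t _; exact: poweR_ge0).
  all: try (move=> t _; rewrite /= lee_fin; exact: powR_ge0).
  + apply/measurable_EFinP; apply: (measurableT_comp (measurable_powR _)).
    exact: measurableT_comp.
  + move=> t _ /=; rewrite lee_fin; apply: ge0_ler_powR => //.
    by rewrite nnegrE (le_trans (normr_ge0 (f t)) (fM t)).
- by rewrite integral_cst // ltey_eq fin_numM // (fin_num_measure P _ measurableT).
Qed.

Lemma mpre (X : {RV P >-> R}) (E : set R) : measurable E -> measurable (X @^-1` E).
Proof. by move=> mE; rewrite -[X @^-1` E]setTI; exact: (measurable_funPT X) measurableT _ mE. Qed.

Lemma indic_comp (X : {RV P >-> R}) (E : set R) : (\1_E \o X) = (\1_(X @^-1` E) : T -> R).
Proof. by apply/funext => t. Qed.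

Lemma indic_L (X : {RV P >-> R}) (E : set R) : measurable E -> (\1_E \o X) \in Lfun P 2%:E.
Proof.
move=> mE; apply: (@bdd_Lfun _ 1).
- by apply: measurableT_comp => //; exact: measurable_indic.
- by move=> t; rewrite /= /indic; case: (_ \in _); rewrite ?normr1 ?normr0.
Qed.

Lemma cov_indic (E F : set R) : measurable E -> measurable F ->
  covariance P (\1_E \o X1) (\1_F \o X2) =
  (fine (P (X1 @^-1` E `&` X2 @^-1` F)) - fine (mu E) * fine (mu F))%:E.
Proof.
move=> mE mF.
have Pfin : P setT \is a fin_num := fin_num_measure P _ measurableT.
have LE := indic_L X1 mE; have LF := indic_L X2 mF.
rewrite covarianceE; last 3 first.
- exact: Lfun_subset12.
- exact: Lfun_subset12.
- exact: Lfun2_mul_Lfun1.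
have -> : ('E_P[(\1_E \o X1) * (\1_F \o X2)] = P (X1 @^-1` E `&` X2 @^-1` F))%E.
  have -> : ((\1_E \o X1) * (\1_F \o X2))%R = (\1_(X1 @^-1` E `&` X2 @^-1` F) : T -> R).
    by apply/funext => t; rewrite indicI.
  rewrite unlock integral_indic ?setIT //.
  by apply: measurableI; exact: mpre.
have -> : ('E_P[\1_E \o X1] = mu E)%E.
  by rewrite indic_comp unlock integral_indic ?setIT //; exact: mpre.
have -> : ('E_P[\1_F \o X2] = mu F)%E.
  by rewrite indic_comp unlock integral_indic ?setIT // ?/mu ?Hd //; exact: mpre.
have f1 : P (X1 @^-1` E `&` X2 @^-1` F) \is a fin_num.
  by apply: fin_num_measure; apply: measurableI; exact: mpre.
have f2 : mu E \is a fin_num by apply: fin_num_measure.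
have f3 : mu F \is a fin_num by apply: fin_num_measure.
by rewrite -[in LHS](fineK f1) -[in LHS](fineK f2) -[in LHS](fineK f3).
Qed.

Lemma IC_indep (IC : IC0 P X1 X2) : rearr_indep P X1 X2.
Proof.
move=> A B mA mB.
rewrite rearr_marg1 // rearr_marg2 //.
have miA : measurable_fun setT (\1_A : R -> R) by exact: measurable_indic.
have miB : measurable_fun setT (\1_B : R -> R) by exact: measurable_indic.
have hA := IC_cov IC miA (indic_L X1 mA).
have hB := IC_cov IC miB (indic_L X1 mB).
rewrite cov_indic //= in hA; rewrite cov_indic //= in hB.
have mg : measurable_fun setT (fun x => \1_A x + \1_B x : R) by exact: measurable_funD.
have LsX (X : {RV P >-> R}) : ((fun x => \1_A x + \1_B x : R) \o X) \in Lfun P 2%:E.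
  suff -> : ((fun x => \1_A x + \1_B x : R) \o X) = ((\1_A \o X) + (\1_B \o X))%R.
    have p1 : (1 <= 2%:E :> \bar R)%E by rewrite lee1n.
    exact: (Lfun_addr_closed P p1).2 _ _ (indic_L X mA) (indic_L X mB).
  by apply/funext.
have hAB := IC_cov IC mg (LsX X1).
have e : covariance P ((fun x => \1_A x + \1_B x : R) \o X1) ((fun x => \1_A x + \1_B x : R) \o X2)
   = ((covariance P (\1_A \o X1) (\1_A \o X2) + covariance P (\1_A \o X1) (\1_B \o X2)) +
      (covariance P (\1_B \o X1) (\1_A \o X2) + covariance P (\1_B \o X1) (\1_B \o X2)))%E.
  transitivity (covariance P ((\1_A \o X1) \+ (\1_B \o X1))%R ((\1_A \o X2) \+ (\1_B \o X2))%R); first by [].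
  rewrite covarianceDl; last 3 first.
  - exact: indic_L.
  - exact: indic_L.
  - exact: (LsX X2).
  by rewrite !covarianceDr //; exact: indic_L.
rewrite e in hAB.
rewrite !cov_indic //= in hAB.
have f1 : P (X1 @^-1` A `&` X2 @^-1` B) \is a fin_num.
  by apply: fin_num_measure; apply: measurableI; exact: mpre.
have f2 : P (X2 @^-1` A `&` X1 @^-1` B) \is a fin_num.
  by apply: fin_num_measure; apply: measurableI; exact: mpre.
have f3 : mu A \is a fin_num by apply: fin_num_measure.
have f4 : mu B \is a fin_num by apply: fin_num_measure.
rewrite /rearr_law.
rewrite -(fineK f1) -(fineK f2) -(fineK f3) -(fineK f4) -EFinD -!EFinM.
congr (_%:E).
rewrite [X2 @^-1` A `&` X1 @^-1` B]setIC.
lra.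
Qed.
End S.

Unset Implicit Arguments.
Theorem proposition2 (d : measure_display) (T : measurableType d)
  (R : realType) (P : probability T R) (X1 X2 : {RV P >-> R}) :
  inL2 P X1 -> inL2 P X2 ->
  distribution P X1 = distribution P X2 ->
  (IC0 P X1 X2 <-> rearr_indep P X1 X2).
Proof.
move=> [L1 _] [L2 _] Hd; split.
- exact: (@IC_indep _ _ _ P X1 X2 Hd).
- move=> H; split.
  + move=> g mg [Lg1 _] [Lg2 _].
    by rewrite /corr (@cov_zero _ _ _ P X1 X2 Hd H g mg Lg1 Lg2) /= mul0r.
  + have Hc : covariance P X1 X2 = 0%E.
      have := @cov_zero _ _ _ P X1 X2 Hd H id (@measurable_id _ _ setT).
      by apply.
    by rewrite /corr Hc /= mul0r.
Qed.
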